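(* Let $T$ be a $\delta$-Jordan Lie supertriple system and $(V,\theta)$ a representation of $T$. Then $T\oplus V$, with degree $|(a,u)|=|a|$ and the triple product $$[(a,u),(b,v),(c,w)]=\big([a,b,c],\ (-1)^{|a|(|b|+|c|)}\theta(b,c)(u)-\delta(-1)^{|b||c|}\theta(a,c)(v)+\delta D(a,b)(w)\big),$$ is a $\delta$-Jordan Lie supertriple system.
   Context: A $\delta$-Jordan Lie supertriple system ($\delta\in\{1,-1\}$) is a $\mathbb{Z}_2$-graded vector space $T=T_{\bar 0}\oplus T_{\bar 1}$ with a trilinear product $[\cdot,\cdot,\cdot]$ such that, for all homogeneous $a,b,c,d,e$ (with $|a|$ the degree of $a$): $|[a,b,c]|=|a|+|b|+|c|$; $[b,a,c]=-\delta(-1)^{|a||b|}[a,b,c]$; $(-1)^{|a||c|}[a,b,c]+(-1)^{|b||a|}[b,c,a]+(-1)^{|c||b|}[c,a,b]=0$; and $[a,b,[c,d,e]]=[[a,b,c],d,e]+(-1)^{|c|(|a|+|b|)}[c,[a,b,d],e]+\delta(-1)^{(|a|+|b|)(|c|+|d|)}[c,d,[a,b,e]]$. A representation of $T$ is a pair $(V,\theta)$ where $V$ is a $\mathbb{Z}_2$-graded vector space and $\theta:T\otimes T\to End(V)$ is bilinear such that, writing $D(a,b)=(-1)^{|a||b|}\theta(b,a)-\delta\theta(a,b)$, for all homogeneous $a,b,c,d\in T$: (R1) $(-1)^{(|a|+|b|)(|c|+|d|)}\theta(c,d)\theta(a,b)-\delta(-1)^{|a||b|+|d|(|c|+|a|)}\theta(b,d)\theta(a,c)-\theta(a,[b,c,d])+(-1)^{|a|(|b|+|c|)}D(b,c)\theta(a,d)=0$;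 (R2) $\delta(-1)^{(|a|+|b|)(|c|+|d|)}\theta(c,d)D(a,b)-\delta D(a,b)\theta(c,d)+\theta([a,b,c],d)+\delta(-1)^{|c|(|a|+|b|)}\theta(c,[a,b,d])=0$; (R3) $D([a,b,c],d)+(-1)^{|c|(|a|+|b|)}D(c,[a,b,d])-\delta D(a,b)D(c,d)+(-1)^{(|a|+|b|)(|c|+|d|)}D(c,d)D(a,b)=0$. *)

(* Defs.v *)
From HB Require Import structures.
From mathcomp Require Import all_boot all_order all_algebra.
Set Implicit Arguments. Unset Strict Implicit. Unset Printing Implicit Defensive.
Import GRing.Theory.
Local Open Scope ring_scope.

(* Conventions.
   - A Z_2-graded vector space over the field K is an lmodType T together with
     the linear idempotent projection [par] onto the even part T_0 along T_1:
     x is homogeneous of degree false (= 0) iff par x = x, and homogeneous of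
     degree true (= 1) iff par x = 0.
   - Degrees are booleans; addition of degrees is [addb], product is [&&].
   - sg b := (-1)^b. *)

Section Defs.
Variable K : fieldType.

Definition sg (b : bool) : K := (-1) ^+ b.

Definition graded (T : lmodType K) (par : T -> T) : Prop :=
  (forall (k : K) (x y : T), par (k *: x + y) = k *: par x + par y) /\
  (forall x, par (par x) = par x).

Definition hom (T : lmodType K) (par : T -> T) (d : bool) (x : T) : Prop :=
  if d then par x = 0 else par x = x.

Definition comp (T : lmodType K) (par : T -> T) (d : bool) (x : T) : T :=
  if d then x - par x else par x.

Definition bsum (M : zmodType) (f : bool -> M) : M := f false + f true.

Definition trilinear (T : lmodType K) (br : T -> T -> T -> T) : Prop :=
  (forall k a a' b c, br (k *: a + a') b c = k *: br a b c + br a' b c) /\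
  (forall k a b b' c, br a (k *: b + b') c = k *: br a b c + br a b' c) /\
  (forall k a b c c', br a b (k *: c + c') = k *: br a b c + br a b c').

Definition JLSTS (T : lmodType K) (par : T -> T) (delta : K)
    (br : T -> T -> T -> T) : Prop :=
  graded par /\ trilinear br /\
  (forall da db dc a b c, hom par da a -> hom par db b -> hom par dc c ->
     hom par (da (+) db (+) dc) (br a b c)) /\
  (forall da db a b c, hom par da a -> hom par db b ->
     br b a c = - (delta * sg (da && db)) *: br a b c) /\
  (forall da db dc a b c, hom par da a -> hom par db b -> hom par dc c ->
     sg (da && dc) *: br a b c + sg (db && da) *: br b c a
     + sg (dc && db) *: br c a b = 0) /\
  (forall da db dc dd a b c d e,
     hom par da a -> hom par db b -> hom par dc c -> hom par dd d ->
     (forall de, hom par de e ->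
     br a b (br c d e) = br (br a b c) d e
        + sg (dc && (da (+) db)) *: br c (br a b d) e
        + (delta * sg ((da (+) db) && (dc (+) dd))) *: br c d (br a b e))).

Definition Dop (T V : lmodType K) (delta : K) (theta : T -> T -> V -> V)
    (da db : bool) (a b : T) (v : V) : V :=
  sg (da && db) *: theta b a v - delta *: theta a b v.

Definition representation (T : lmodType K) (par : T -> T) (delta : K)
    (br : T -> T -> T -> T) (V : lmodType K) (parV : V -> V)
    (theta : T -> T -> V -> V) : Prop :=
  graded parV /\
  (forall a b k u v, theta a b (k *: u + v) = k *: theta a b u + theta a b v) /\
  (forall k a a' b u, theta (k *: a + a') b u = k *: theta a b u + theta a' b u) /\
  (forall k a b b' u, theta a (k *: b + b') u = k *: theta a b u + theta a b' u) /\
  (forall da db du a b u, hom par da a -> hom par db b -> hom parV du u ->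
     hom parV (da (+) db (+) du) (theta a b u)) /\
  let D := Dop delta theta in
  (forall da db dc dd a b c d, hom par da a -> hom par db b ->
     hom par dc c -> hom par dd d -> forall v : V,
   (* R1 *)
   sg ((da (+) db) && (dc (+) dd)) *: theta c d (theta a b v)
   - (delta * sg ((da && db) (+) (dd && (dc (+) da)))) *: theta b d (theta a c v)
   - theta a (br b c d) v
   + sg (da && (db (+) dc)) *: D db dc b c (theta a d v) = 0
   /\
   (* R2 *)
   (delta * sg ((da (+) db) && (dc (+) dd))) *: theta c d (D da db a b v)
   - delta *: D da db a b (theta c d v)
   + theta (br a b c) d v
   + (delta * sg (dc && (da (+) db))) *: theta c (br a b d) v = 0
   /\
   (* R3 *)
   D (da (+) db (+) dc) dd (br a b c) d v
   + sg (dc && (da (+) db)) *: D dc (da (+) db (+) dd) c (br a b d) v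
   - delta *: D da db a b (D dc dd c d v)
   + sg ((da (+) db) && (dc (+) dd)) *: D dc dd c d (D da db a b v) = 0).

(* The grading on T (+) V: |(a,u)| = |a|, homogeneous elements being pairs
   of homogeneous elements of equal degree. *)
Definition parTV (T V : lmodType K) (par : T -> T) (parV : V -> V)
    (x : T * V) : T * V := (par x.1, parV x.2).

Definition brTV_hom (T V : lmodType K) (delta : K) (br : T -> T -> T -> T)
    (theta : T -> T -> V -> V) (da db dc : bool) (x y z : T * V) : T * V :=
  let: (a, u) := x in let: (b, v) := y in let: (c, w) := z in
  (br a b c,
   sg (da && (db (+) dc)) *: theta b c u
   - (delta * sg (db && dc)) *: theta a c v
   + delta *: Dop delta theta da db a b w).

(* Trilinear extension to all of T (+) V via homogeneous components. *)
Definition brTV (T V : lmodType K) (par : T -> T) (parV : V -> V) (delta : K)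
    (br : T -> T -> T -> T) (theta : T -> T -> V -> V) (x y z : T * V) :
    T * V :=
  let cp d := comp (parTV par parV) d in
  bsum (fun da => bsum (fun db => bsum (fun dc =>
    brTV_hom delta br theta da db dc (cp da x) (cp db y) (cp dc z)))).

End Defs.

(* Main.v *)
Require Import Defs.
From HB Require Import structures.
From mathcomp Require Import all_boot all_order all_algebra.
Import GRing.Theory.
Local Open Scope ring_scope.
From mathcomp Require Import ring.
Import Defs.
Set Implicit Arguments. Unset Strict Implicit.

Module LinM.
Section Lin.
Variables (R : comRingType) (V : lmodType R).
Inductive lexpr : Type :=
  | LAt of nat | LZ | LAdd of lexpr & lexpr | LOpp of lexpr | LScale of R & lexpr.
Fixpoint leval (env : seq V) (e : lexpr) : V :=
  match e with
  | LAt i => nth 0 env i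
  | LZ => 0
  | LAdd a b => leval env a + leval env b
  | LOpp a => - leval env a
  | LScale k a => k *: leval env a
  end.
Fixpoint lcoef (e : lexpr) (i : nat) : R :=
  match e with
  | LAt j => if eqn i j then 1 else 0
  | LZ => 0
  | LAdd a b => lcoef a i + lcoef b i
  | LOpp a => - lcoef a i
  | LScale k a => k * lcoef a i
  end.
Lemma leval_sum env e : leval env e = \sum_(i < size env) lcoef e i *: env`_i.
Proof.
elim: e => [j||a IHa b IHb|a IHa|k a IHa] /=.
- rewrite eqnE; case: (ltnP j (size env)) => hj.
    rewrite (bigD1 (Ordinal hj)) //= eqxx scale1r big1 ?addr0 // => i hi.
    have -> : (i == j :> nat) = false.
      by apply/negbTE; apply: contra hi => /eqP e; apply/eqP; apply: val_inj.
    by rewrite scale0r.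
  rewrite nth_default // big1 // => i _.
  have -> : (i == j :> nat) = false.
    by apply/negbTE/eqP => e; move: (ltn_ord i); rewrite e ltnNge hj.
  by rewrite scale0r.
- by rewrite big1 // => i _; rewrite scale0r.
- by rewrite IHa IHb -big_split /=; apply: eq_bigr => i _; rewrite scalerDl.
- by rewrite IHa -sumrN; apply: eq_bigr => i _; rewrite scaleNr.
- by rewrite IHa scaler_sumr; apply: eq_bigr => i _; rewrite scalerA.
Qed.
Fixpoint coefs_eq (n : nat) (e1 e2 : lexpr) : Prop :=
  match n with 0 => True | n'.+1 => lcoef e1 n' = lcoef e2 n' /\ coefs_eq n' e1 e2 end.
Lemma coefs_eqP n e1 e2 : coefs_eq n e1 e2 -> forall i, (i < n)%N -> lcoef e1 i = lcoef e2 i.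
Proof.
elim: n => [//|n IH] /= [h1 h2] i; rewrite ltnS leq_eqVlt => /orP [/eqP -> //|]; exact: IH.
Qed.
Lemma leval_eq env e1 e2 : coefs_eq (size env) e1 e2 -> leval env e1 = leval env e2.
Proof.
move=> h; rewrite !leval_sum; apply: eq_bigr => i _.
by rewrite (coefs_eqP h (ltn_ord i)).
Qed.
End Lin.

Ltac lpos x env :=
  lazymatch env with
  | nil => constr:(@None nat)
  | cons (?n, ?y) ?tl =>
      lazymatch constr:((x, y)) with
      | (?z, ?z) => constr:(Some n)
      | _ => lpos x tl
      end
  end.

Ltac reify R V t env cnt :=
  lazymatch t with
  | @GRing.zero _ => constr:((@LZ R, env, cnt))
  | @GRing.add _ ?a ?b =>
      let r1 := reify R V a env cnt in
      lazymatch r1 with (?ea, ?env1, ?c1) =>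
        let r2 := reify R V b env1 c1 in
        lazymatch r2 with (?eb, ?env2, ?c2) => constr:((LAdd ea eb, env2, c2)) end end
  | @GRing.opp _ ?a =>
      let r1 := reify R V a env cnt in
      lazymatch r1 with (?ea, ?env1, ?c1) => constr:((LOpp ea, env1, c1)) end
  | @GRing.scale _ _ ?k ?a =>
      let r1 := reify R V a env cnt in
      lazymatch r1 with (?ea, ?env1, ?c1) => constr:((@LScale R k ea, env1, c1)) end
  | _ =>
      let p := lpos t env in
      lazymatch p with
      | Some ?n => constr:((@LAt R n, env, cnt))
      | None => constr:((@LAt R cnt, (cnt, t) :: env, S cnt))
      end
  end.

Ltac mkenv env acc :=
  lazymatch env with
  | nil => acc
  | cons (_, ?x) ?tl => mkenv tl (x :: acc)
  end.

Ltac lin_reflect R V :=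
  lazymatch goal with |- ?l = ?r =>
    let r1 := reify R V l (@nil (nat * V)) O in
    lazymatch r1 with (?el, ?env1, ?c1) =>
    let r2 := reify R V r env1 c1 in
    lazymatch r2 with (?er, ?env2, ?c2) =>
    let envl := mkenv env2 (@nil V) in
    change (leval envl el = leval envl er);
    apply: leval_eq;
    cbv [coefs_eq lcoef eqn size]
    end end
  end.
End LinM.

Module ReflM.
Inductive bexp := BV of nat | BT | BF | BX of bexp & bexp | BA of bexp & bexp.
Fixpoint bden (be : seq bool) b : bool :=
  match b with
  | BV i => nth false be i | BT => true | BF => false
  | BX x y => bden be x (+) bden be y | BA x y => bden be x && bden be y
  end.
Inductive kexp := KZ | K1 | KD | KS of bexp | KAdd of kexp & kexp
  | KMul of kexp & kexp | KOpp of kexp.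
Fixpoint kint (be : seq bool) (ds : bool) k : int :=
  match k with
  | KZ => 0 | K1 => 1 | KD => if ds then -1 else 1
  | KS b => if bden be b then -1 else 1
  | KAdd x y => kint be ds x + kint be ds y
  | KMul x y => kint be ds x * kint be ds y
  | KOpp x => - kint be ds x
  end.
Fixpoint allenvs n : seq (seq bool) :=
  if n is n'.+1 then [seq b :: l | b <- [:: false; true], l <- allenvs n'] else [:: [::]].
Lemma allenvsP n be : size be = n -> be \in allenvs n.
Proof.
elim: n be => [|n IH] [|b be] //= [/IH h].
case: b; rewrite /= ?mem_cat.
- by apply/orP; right; apply/orP; left; apply/mapP; exists be.
- by apply/orP; left; apply/mapP; exists be.
Qed.
Definition check_k n k1 k2 :=
  all (fun be => (kint be false k1 == kint be false k2) && (kint be true k1 == kint be true k2))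
      (allenvs n).

Inductive lexpr := LAt of nat | LZ | LAdd of lexpr & lexpr | LOpp of lexpr | LScale of kexp & lexpr.
Fixpoint lcoef (e : lexpr) (i : nat) : kexp :=
  match e with
  | LAt j => if eqn i j then K1 else KZ
  | LZ => KZ
  | LAdd a b => KAdd (lcoef a i) (lcoef b i)
  | LOpp a => KOpp (lcoef a i)
  | LScale k a => KMul k (lcoef a i)
  end.
Definition lcheck nb n e1 e2 := all (fun i => check_k nb (lcoef e1 i) (lcoef e2 i)) (iota 0 n).

Section Den.
Variables (K : fieldType) (V : lmodType K).
Fixpoint kden (be : seq bool) (d : K) k : K :=
  match k with
  | KZ => 0 | K1 => 1 | KD => d
  | KS b => sg K (bden be b)
  | KAdd x y => kden be d x + kden be d y
  | KMul x y => kden be d x * kden be d y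
  | KOpp x => - kden be d x
  end.
Lemma kden_int be ds k : kden be (if ds then -1 else 1) k = (kint be ds k)%:~R.
Proof.
elim: k => [|||b|x IHx y IHy|x IHx y IHy|x IHx] /=.
- by [].
- by [].
- by case: ds.
- by rewrite /sg; case: (bden be b); rewrite /= ?expr1 ?expr0.
- by rewrite IHx IHy intrD.
- by rewrite IHx IHy intrM.
- by rewrite IHx intrN.
Qed.
Lemma check_kP n k1 k2 be d : check_k n k1 k2 -> size be = n -> (d = 1 \/ d = -1) ->
  kden be d k1 = kden be d k2.
Proof.
move=> /allP /(_ be) h /allenvsP /h /andP [/eqP h0 /eqP h1].
case=> ->; [have := kden_int be false | have := kden_int be true] => /= E;
by rewrite !E ?h0 ?h1.
Qed.
Fixpoint leval (be : seq bool) (d : K) (env : seq V) (e : lexpr) : V :=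
  match e with
  | LAt i => nth 0 env i
  | LZ => 0
  | LAdd a b => leval be d env a + leval be d env b
  | LOpp a => - leval be d env a
  | LScale k a => kden be d k *: leval be d env a
  end.
Lemma leval_sum be d env e :
  leval be d env e = \sum_(i < size env) kden be d (lcoef e i) *: env`_i.
Proof.
elim: e => [j||a IHa b IHb|a IHa|k a IHa] /=.
- rewrite eqnE; case: (ltnP j (size env)) => hj.
    rewrite (bigD1 (Ordinal hj)) //= eqxx scale1r big1 ?addr0 // => i hi.
    have -> : (i == j :> nat) = false.
      by apply/negbTE; apply: contra hi => /eqP e; apply/eqP; apply: val_inj.
    by rewrite scale0r.
  rewrite nth_default // big1 // => i _.
  have -> : (i == j :> nat) = false.
    by apply/negbTE/eqP => e; move: (ltn_ord i); rewrite e ltnNge hj.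
  by rewrite scale0r.
- by rewrite big1 // => i _; rewrite scale0r.
- by rewrite IHa IHb -big_split /=; apply: eq_bigr => i _; rewrite scalerDl.
- by rewrite IHa -sumrN; apply: eq_bigr => i _; rewrite scaleNr.
- by rewrite IHa scaler_sumr; apply: eq_bigr => i _; rewrite scalerA.
Qed.
Lemma lcheckP be d env e1 e2 : (d = 1 \/ d = -1) ->
  lcheck (size be) (size env) e1 e2 -> leval be d env e1 = leval be d env e2.
Proof.
move=> hd /allP h; rewrite !leval_sum; apply: eq_bigr => i _.
by rewrite (check_kP (h i _) erefl hd) // mem_iota /= add0n ltn_ord.
Qed.
End Den.

Ltac bpos x env n :=
  lazymatch env with
  | cons ?y ?tl =>
      lazymatch constr:((x, y)) with
      | (?z, ?z) => n
      | _ => bpos x tl (S n)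
      end
  end.
Ltac breify b env :=
  lazymatch b with
  | true => constr:(BT) | false => constr:(BF)
  | addb ?x ?y => let a := breify x env in let c := breify y env in constr:(BX a c)
  | andb ?x ?y => let a := breify x env in let c := breify y env in constr:(BA a c)
  | _ => let n := bpos b env O in constr:(BV n)
  end.
Ltac kreify d k env :=
  lazymatch k with
  | @GRing.zero _ => constr:(KZ)
  | @GRing.one _ => constr:(K1)
  | d => constr:(KD)
  | sg _ ?b => let a := breify b env in constr:(KS a)
  | @GRing.add _ ?x ?y => let a := kreify d x env in let c := kreify d y env in constr:(KAdd a c)
  | @GRing.mul _ ?x ?y => let a := kreify d x env in let c := kreify d y env in constr:(KMul a c)
  | @GRing.opp _ ?x => let a := kreify d x env in constr:(KOpp a)
  end.
Ltac lpos x env :=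
  lazymatch env with
  | nil => constr:(@None nat)
  | cons (?n, ?y) ?tl =>
      lazymatch constr:((x, y)) with
      | (?z, ?z) => constr:(Some n)
      | _ => lpos x tl
      end
  end.
Ltac reify d benv V t env cnt :=
  lazymatch t with
  | @GRing.zero _ => constr:((LZ, env, cnt))
  | @GRing.add _ ?a ?b =>
      let r1 := reify d benv V a env cnt in
      lazymatch r1 with (?ea, ?env1, ?c1) =>
        let r2 := reify d benv V b env1 c1 in
        lazymatch r2 with (?eb, ?env2, ?c2) => constr:((LAdd ea eb, env2, c2)) end end
  | @GRing.opp _ ?a =>
      let r1 := reify d benv V a env cnt in
      lazymatch r1 with (?ea, ?env1, ?c1) => constr:((LOpp ea, env1, c1)) end
  | @GRing.scale _ _ ?k ?a =>
      let kk := kreify d k benv in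
      let r1 := reify d benv V a env cnt in
      lazymatch r1 with (?ea, ?env1, ?c1) => constr:((LScale kk ea, env1, c1)) end
  | _ =>
      let p := lpos t env in
      lazymatch p with
      | Some ?n => constr:((LAt n, env, cnt))
      | None => constr:((LAt cnt, (cnt, t) :: env, S cnt))
      end
  end.
Ltac mkenv env acc :=
  lazymatch env with
  | nil => acc
  | cons (_, ?x) ?tl => mkenv tl (x :: acc)
  end.
Ltac lin_check V d benv Hd :=
  lazymatch goal with |- ?l = ?r =>
    let r1 := reify d benv V l (@nil (nat * V)) O in
    lazymatch r1 with (?el, ?env1, ?c1) =>
    let r2 := reify d benv V r env1 c1 in
    lazymatch r2 with (?er, ?env2, ?c2) =>
    let envl := mkenv env2 (@nil V) in
    change (leval benv d envl el = leval benv d envl er);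
    apply: (lcheckP Hd); vm_compute; reflexivity
    end end
  end.
End ReflM.

Ltac bsplit := repeat match goal with |- context [?b] => is_var b;
  lazymatch type of b with bool => destruct b end end.

Section Gen.
Variable K : fieldType.

Lemma linE (U W : lmodType K) (f : U -> W) :
  (forall k x y, f (k *: x + y) = k *: f x + f y) ->
  [/\ f 0 = 0, forall x y, f (x + y) = f x + f y,
      forall k x, f (k *: x) = k *: f x & forall x, f (- x) = - f x].
Proof.
move=> H.
have f0 : f 0 = 0.
  have := H 1 0 0; rewrite scaler0 addr0 scale1r.
  by move/(congr1 (fun z => z - f 0)); rewrite addrK subrr.
split=> //.
- by move=> x y; rewrite -[x]scale1r H !scale1r.
- by move=> k x; rewrite -[k *: x]addr0 H f0 addr0.
- by move=> x; rewrite -scaleN1r -[_ *: x]addr0 H f0 addr0 scaleN1r.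
Qed.

Lemma pairD (T V : lmodType K) (a b : T) (u v : V) : (a, u) + (b, v) = (a + b, u + v). Proof. by []. Qed.
Lemma pairZ (T V : lmodType K) (k : K) (a : T) (u : V) : k *: (a, u) = (k *: a, k *: u). Proof. by []. Qed.
Lemma pairN (T V : lmodType K) (a : T) (u : V) : - (a, u) = (- a, - u). Proof. by []. Qed.
Lemma pair0 (T V : lmodType K) : (0 : T * V) = (0, 0). Proof. by []. Qed.

Lemma hom_lin (W : lmodType K) (p : W -> W) d k x y : graded p ->
  hom p d x -> hom p d y -> hom p d (k *: x + y).
Proof. by case=> pl _; case: d; rewrite /hom pl => -> ->; rewrite ?scaler0 ?addr0. Qed.
Lemma hom_add (W : lmodType K) (p : W -> W) d x y : graded p ->
  hom p d x -> hom p d y -> hom p d (x + y).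
Proof. by move=> g hx hy; rewrite -[x]scale1r; apply: hom_lin. Qed.
Lemma hom0 (W : lmodType K) (p : W -> W) d : graded p -> hom p d 0.
Proof.
case=> pl _; have := linE pl; case=> p0 _ _ _; by case: d; rewrite /hom p0.
Qed.
Lemma hom_scale (W : lmodType K) (p : W -> W) d k x : graded p ->
  hom p d x -> hom p d (k *: x).
Proof. by move=> g hx; rewrite -[_ *: x]addr0; apply: hom_lin => //; apply: hom0. Qed.
Lemma hom_opp (W : lmodType K) (p : W -> W) d x : graded p ->
  hom p d x -> hom p d (- x).
Proof. by move=> g hx; rewrite -scaleN1r; apply: hom_scale. Qed.
Lemma hom_sub (W : lmodType K) (p : W -> W) d x y : graded p ->
  hom p d x -> hom p d y -> hom p d (x - y).
Proof. by move=> g hx hy; apply: hom_add => //; apply: hom_opp. Qed.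
Lemma hom_eq (W : lmodType K) (p : W -> W) d d' x : hom p d x -> d = d' -> hom p d' x.
Proof. by move=> h <-. Qed.

Lemma comp_hom (W : lmodType K) (p : W -> W) d x : hom p d x -> comp p d x = x.
Proof. by case: d; rewrite /hom /comp => ->; rewrite ?subr0. Qed.
Lemma comp_homN (W : lmodType K) (p : W -> W) d x : hom p d x -> comp p (~~ d) x = 0.
Proof. by case: d; rewrite /hom /comp => -> //; rewrite subrr. Qed.
Lemma comp_lin (W : lmodType K) (p : W -> W) (g : graded p) d k x y :
  comp p d (k *: x + y) = k *: comp p d x + comp p d y.
Proof.
case: g => pl _; case: d; rewrite /comp pl //.
LinM.lin_reflect K W; repeat split; ring.
Qed.

Lemma iso1 (W : lmodType K) (A B X C : W) : A - B - X + C = 0 -> X = A - B + C.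
Proof.
move=> h; have e : X = (A - B + C) - (A - B - X + C) by LinM.lin_reflect K W; repeat split; ring.
by rewrite e h subr0.
Qed.
Lemma iso2 (W : lmodType K) (A B X C : W) : A - B + X + C = 0 -> X = B - A - C.
Proof.
move=> h; have e : X = (B - A - C) + (A - B + X + C) by LinM.lin_reflect K W; repeat split; ring.
by rewrite e h addr0.
Qed.
Lemma iso3 (W : lmodType K) (X B C E : W) : X + B - C + E = 0 -> X = C - B - E.
Proof.
move=> h; have e : X = (C - B - E) + (X + B - C + E) by LinM.lin_reflect K W; repeat split; ring.
by rewrite e h addr0.
Qed.
End Gen.

Section Main.
Variables (K : fieldType) (delta : K) (T : lmodType K) (par : T -> T)
  (br : T -> T -> T -> T) (V : lmodType K) (parV : V -> V)
  (theta : T -> T -> V -> V).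
Hypothesis Hd : delta = 1 \/ delta = -1.
Hypothesis gT : graded par.
Hypothesis brL1 : forall k a a' b c, br (k *: a + a') b c = k *: br a b c + br a' b c.
Hypothesis brL2 : forall k a b b' c, br a (k *: b + b') c = k *: br a b c + br a b' c.
Hypothesis brL3 : forall k a b c c', br a b (k *: c + c') = k *: br a b c + br a b c'.
Hypothesis brhom : forall da db dc a b c, hom par da a -> hom par db b -> hom par dc c ->
     hom par (da (+) db (+) dc) (br a b c).
Hypothesis brskew : forall da db a b c, hom par da a -> hom par db b ->
     br b a c = - (delta * sg K (da && db)) *: br a b c.
Hypothesis brcyc : forall da db dc a b c, hom par da a -> hom par db b -> hom par dc c ->
     sg K (da && dc) *: br a b c + sg K (db && da) *: br b c a
     + sg K (dc && db) *: br c a b = 0.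
Hypothesis brfund : forall da db dc dd a b c d e,
     hom par da a -> hom par db b -> hom par dc c -> hom par dd d ->
     (forall de, hom par de e ->
     br a b (br c d e) = br (br a b c) d e
        + sg K (dc && (da (+) db)) *: br c (br a b d) e
        + (delta * sg K ((da (+) db) && (dc (+) dd))) *: br c d (br a b e)).
Hypothesis gV : graded parV.
Hypothesis thL : forall a b k u v, theta a b (k *: u + v) = k *: theta a b u + theta a b v.
Hypothesis thL1 : forall k a a' b u, theta (k *: a + a') b u = k *: theta a b u + theta a' b u.
Hypothesis thL2 : forall k a b b' u, theta a (k *: b + b') u = k *: theta a b u + theta a b' u.
Hypothesis thhom : forall da db du a b u, hom par da a -> hom par db b -> hom parV du u ->
     hom parV (da (+) db (+) du) (theta a b u).
Notation D := (Dop delta theta).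
Hypothesis RR : forall da db dc dd a b c d, hom par da a -> hom par db b ->
     hom par dc c -> hom par dd d -> forall v : V,
   sg K ((da (+) db) && (dc (+) dd)) *: theta c d (theta a b v)
   - (delta * sg K ((da && db) (+) (dd && (dc (+) da)))) *: theta b d (theta a c v)
   - theta a (br b c d) v
   + sg K (da && (db (+) dc)) *: D db dc b c (theta a d v) = 0
   /\
   (delta * sg K ((da (+) db) && (dc (+) dd))) *: theta c d (D da db a b v)
   - delta *: D da db a b (theta c d v)
   + theta (br a b c) d v
   + (delta * sg K (dc && (da (+) db))) *: theta c (br a b d) v = 0
   /\
   D (da (+) db (+) dc) dd (br a b c) d v
   + sg K (dc && (da (+) db)) *: D dc (da (+) db (+) dd) c (br a b d) v
   - delta *: D da db a b (D dc dd c d v)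
   + sg K ((da (+) db) && (dc (+) dd)) *: D dc dd c d (D da db a b v) = 0.

Ltac ksolve := repeat split; rewrite ?(mulr0, mul0r, addr0, add0r, mulr1, subr0, sub0r, oppr0, mulrN, mulNr); first [case: (Hd) => -> | idtac]; bsplit; rewrite /sg /= ?expr0 ?expr1; ring.

Lemma br0l b c : br 0 b c = 0. Proof. by case: (linE (fun k a a' => brL1 k a a' b c)). Qed.
Lemma br0m a c : br a 0 c = 0. Proof. by case: (linE (fun k b b' => brL2 k a b b' c)). Qed.
Lemma br0r a b : br a b 0 = 0. Proof. by case: (linE (fun k c c' => brL3 k a b c c')). Qed.
Lemma th0a b u : theta 0 b u = 0. Proof. by case: (linE (fun k a a' => thL1 k a a' b u)). Qed.
Lemma th0b a u : theta a 0 u = 0. Proof. by case: (linE (fun k b b' => thL2 k a b b' u)). Qed.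
Lemma th0v a b : theta a b 0 = 0. Proof. by case: (linE (thL a b)). Qed.
Lemma thDv a b u v : theta a b (u + v) = theta a b u + theta a b v.
Proof. by case: (linE (thL a b)). Qed.
Lemma thZv a b k u : theta a b (k *: u) = k *: theta a b u.
Proof. by case: (linE (thL a b)). Qed.
Lemma thNv a b u : theta a b (- u) = - theta a b u.
Proof. by case: (linE (thL a b)). Qed.
Lemma DopL d1 d2 a b k u v : D d1 d2 a b (k *: u + v) = k *: D d1 d2 a b u + D d1 d2 a b v.
Proof. rewrite /Dop !thL; LinM.lin_reflect K V; ksolve. Qed.
Lemma DopDv d1 d2 a b u v : D d1 d2 a b (u + v) = D d1 d2 a b u + D d1 d2 a b v.
Proof. by case: (linE (DopL d1 d2 a b)). Qed.
Lemma DopZv d1 d2 a b k u : D d1 d2 a b (k *: u) = k *: D d1 d2 a b u.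
Proof. by case: (linE (DopL d1 d2 a b)). Qed.
Lemma DopNv d1 d2 a b u : D d1 d2 a b (- u) = - D d1 d2 a b u.
Proof. by case: (linE (DopL d1 d2 a b)). Qed.


Notation parW := (parTV par parV).
Notation brW := (brTV par parV delta br theta).
Notation bh := (brTV_hom delta br theta).

Lemma homTV d a u : hom parW d (a, u) <-> hom par d a /\ hom parV d u.
Proof.
case: d; rewrite /hom /parTV /=; split.
- by rewrite pair0 => -[-> ->].
- by case=> -> ->.
- by case=> -> ->.
- by case=> -> ->.
Qed.

Lemma gradedW : graded parW.
Proof.
case: gT => pl pi; case: gV => vl vi; split.
- by move=> k [a u] [b v]; rewrite pairZ pairD /parTV /= pl vl.
- by move=> [a u]; rewrite /parTV /= pi vi.
Qed.

Lemma bh0x d1 d2 d3 y z : bh d1 d2 d3 0 y z = 0.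
Proof.
move: y z => [b v] [c w]; rewrite pair0 /brTV_hom /Dop br0l !th0v !th0a !th0b.
by rewrite !(scaler0, subr0, addr0).
Qed.
Lemma bh0y d1 d2 d3 x z : bh d1 d2 d3 x 0 z = 0.
Proof.
move: x z => [a u] [c w]; rewrite pair0 /brTV_hom /Dop br0m !th0v !th0a !th0b.
by rewrite !(scaler0, subr0, addr0).
Qed.
Lemma bh0z d1 d2 d3 x y : bh d1 d2 d3 x y 0 = 0.
Proof.
move: x y => [a u] [b v]; rewrite pair0 /brTV_hom /Dop br0r !th0v !th0b.
by rewrite !(scaler0, subr0, addr0).
Qed.

Lemma brW_hom da db dc x y z : hom parW da x -> hom parW db y -> hom parW dc z ->
  brW x y z = bh da db dc x y z.
Proof.
move=> hx hy hz; rewrite /brTV /bsum.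
case: da hx => hx; case: db hy => hy; case: dc hz => hz;
rewrite ?(comp_hom hx) ?(comp_homN hx) ?(comp_hom hy) ?(comp_homN hy)
  ?(comp_hom hz) ?(comp_homN hz) ?bh0x ?bh0y ?bh0z ?addr0 ?add0r //.
Qed.

Lemma brW_hom2 da db x y z : hom parW da x -> hom parW db y ->
  brW x y z = bsum (fun dc => bh da db dc x y (comp parW dc z)).
Proof.
move=> hx hy; rewrite /brTV /bsum.
case: da hx => hx; case: db hy => hy;
rewrite ?(comp_hom hx) ?(comp_homN hx) ?(comp_hom hy) ?(comp_homN hy)
  ?bh0x ?bh0y ?addr0 ?add0r //.
Qed.

Lemma thhom' da db du d a b u : hom par da a -> hom par db b -> hom parV du u ->
  da (+) db (+) du = d -> hom parV d (theta a b u).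
Proof. by move=> ha hb hu <-; apply: thhom. Qed.

Lemma hom_bh da db dc x y z : hom parW da x -> hom parW db y -> hom parW dc z ->
  hom parW (da (+) db (+) dc) (bh da db dc x y z).
Proof.
move: x y z => [a u] [b v] [c w] /homTV [ha hu] /homTV [hb hv] /homTV [hc hw].
rewrite /brTV_hom /Dop; apply/homTV; split; first exact: brhom.
apply: hom_add => //; first apply: hom_sub => //.
- by apply: hom_scale => //; apply: (thhom' hb hc hu); bsplit.
- by apply: hom_scale => //; apply: (thhom' ha hc hv); bsplit.
- apply: hom_scale => //; apply: hom_sub => //; apply: hom_scale => //.
  + by apply: (thhom' hb ha hw); bsplit.
  + by apply: (thhom' ha hb hw); bsplit.
Qed.

Lemma bhL1 d1 d2 d3 k x x' y z :
  bh d1 d2 d3 (k *: x + x') y z = k *: bh d1 d2 d3 x y z + bh d1 d2 d3 x' y z.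
Proof.
move: x x' y z => [a u] [a' u'] [b v] [c w].
rewrite pairZ pairD /brTV_hom /Dop pairZ pairD; congr (_, _); first exact: brL1.
rewrite ?thL ?thL1 ?thL2; LinM.lin_reflect K V; ksolve.
Qed.
Lemma bhL2 d1 d2 d3 k x y y' z :
  bh d1 d2 d3 x (k *: y + y') z = k *: bh d1 d2 d3 x y z + bh d1 d2 d3 x y' z.
Proof.
move: x y y' z => [a u] [b v] [b' v'] [c w].
rewrite pairZ pairD /brTV_hom /Dop pairZ pairD; congr (_, _); first exact: brL2.
rewrite ?thL ?thL1 ?thL2; LinM.lin_reflect K V; ksolve.
Qed.
Lemma bhL3 d1 d2 d3 k x y z z' :
  bh d1 d2 d3 x y (k *: z + z') = k *: bh d1 d2 d3 x y z + bh d1 d2 d3 x y z'.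
Proof.
move: x y z z' => [a u] [b v] [c w] [c' w'].
rewrite pairZ pairD /brTV_hom /Dop pairZ pairD; congr (_, _); first exact: brL3.
rewrite ?thL ?thL1 ?thL2; LinM.lin_reflect K V; ksolve.
Qed.

Lemma triW : trilinear (brW).
Proof.
split; [|split].
- move=> k x x' y z; rewrite /brTV /bsum; cbv beta zeta; rewrite !(comp_lin gradedW) !bhL1.
  LinM.lin_reflect K (T * V)%type; ksolve.
- move=> k x y y' z; rewrite /brTV /bsum; cbv beta zeta; rewrite !(comp_lin gradedW) !bhL2.
  LinM.lin_reflect K (T * V)%type; ksolve.
- move=> k x y z z'; rewrite /brTV /bsum; cbv beta zeta; rewrite !(comp_lin gradedW) !bhL3.
  LinM.lin_reflect K (T * V)%type; ksolve.
Qed.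

Lemma skew_bh da db dc x y z : hom parW da x -> hom parW db y ->
  bh db da dc y x z = - (delta * sg K (da && db)) *: bh da db dc x y z.
Proof.
move: x y z => [a u] [b v] [c w] /homTV [ha hu] /homTV [hb hv].
rewrite /brTV_hom /Dop pairZ; congr (_, _); first exact: brskew.
LinM.lin_reflect K V; ksolve.
Qed.

Lemma cycW da db dc x y z : hom parW da x -> hom parW db y -> hom parW dc z ->
  sg K (da && dc) *: brW x y z + sg K (db && da) *: brW y z x
     + sg K (dc && db) *: brW z x y = 0.
Proof.
move=> hx hy hz.
rewrite (brW_hom hx hy hz) (brW_hom hy hz hx) (brW_hom hz hx hy).
move: x y z hx hy hz => [a u] [b v] [c w] /homTV [ha hu] /homTV [hb hv] /homTV [hc hw].
rewrite /brTV_hom /Dop !pairZ !pairD pair0; congr (_, _); cbn [fst snd]; first exact: brcyc.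
LinM.lin_reflect K V; ksolve.
Qed.


Lemma fundV da db dc dd de a b c d e (u v w s t : V) :
  hom par da a -> hom par db b -> hom par dc c -> hom par dd d -> hom par de e ->
 sg K (da && (db (+) (dc (+) dd (+) de))) *: theta b (br c d e) u -
 (delta * sg K (db && (dc (+) dd (+) de))) *: theta a (br c d e) v +
 delta *:
 D da db a b
   (sg K (dc && (dd (+) de)) *: theta d e w -
    (delta * sg K (dd && de)) *: theta c e s + delta *: D dc dd c d t) =
 sg K ((da (+) db (+) dc) && (dd (+) de)) *:
 theta d e
   (sg K (da && (db (+) dc)) *: theta b c u -
    (delta * sg K (db && dc)) *: theta a c v + delta *: D da db a b w) -
 (delta * sg K (dd && de)) *: theta (br a b c) e s +
 delta *: D (da (+) db (+) dc) dd (br a b c) d t +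
 sg K (dc && (da (+) db)) *:
 (sg K (dc && (da (+) db (+) dd (+) de)) *: theta (br a b d) e w -
  (delta * sg K ((da (+) db (+) dd) && de)) *:
  theta c e
    (sg K (da && (db (+) dd)) *: theta b d u -
     (delta * sg K (db && dd)) *: theta a d v + delta *: D da db a b s) +
  delta *: D dc (da (+) db (+) dd) c (br a b d) t) +
 (delta * sg K ((da (+) db) && (dc (+) dd))) *:
 (sg K (dc && (dd (+) (da (+) db (+) de))) *: theta d (br a b e) w -
  (delta * sg K (dd && (da (+) db (+) de))) *: theta c (br a b e) s +
  delta *:
  D dc dd c d
    (sg K (da && (db (+) de)) *: theta b e u -
     (delta * sg K (db && de)) *: theta a e v + delta *: D da db a b t)).
Proof.
move=> ha hb hc hd he.
rewrite ?(thDv, thZv, thNv, DopDv, DopZv, DopNv).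
rewrite (iso1 (proj1 (RR hb hc hd he u))) (iso1 (proj1 (RR ha hc hd he v))).
rewrite (iso2 (proj1 (proj2 (RR ha hb hc he s)))).
rewrite (iso2 (proj1 (proj2 (RR ha hb hd he w)))).
rewrite (iso3 (proj2 (proj2 (RR ha hb hc hd t)))).
rewrite /Dop ?(thDv, thZv, thNv).
ReflM.lin_check V delta [:: da; db; dc; dd; de] Hd.


Qed.

Lemma fundW da db dc dd x y z w e :
  hom parW da x -> hom parW db y -> hom parW dc z -> hom parW dd w ->
  forall de, hom parW de e ->
  brW x y (brW z w e) = brW (brW x y z) w e
     + sg K (dc && (da (+) db)) *: brW z (brW x y w) e
     + (delta * sg K ((da (+) db) && (dc (+) dd))) *: brW z w (brW x y e).
Proof.
move=> hx hy hz hw de he.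
rewrite (brW_hom hz hw he) (brW_hom hx hy hz) (brW_hom hx hy hw) (brW_hom hx hy he).
rewrite (brW_hom hx hy (hom_bh hz hw he)) (brW_hom (hom_bh hx hy hz) hw he).
rewrite (brW_hom hz (hom_bh hx hy hw) he) (brW_hom hz hw (hom_bh hx hy he)).
move: x y z w e hx hy hz hw he => [a u] [b v] [c w] [d s] [e t]
  /homTV [ha hu] /homTV [hb hv] /homTV [hc hw] /homTV [hd hs] /homTV [he ht].
rewrite /brTV_hom !pairZ !pairD; congr (_, _); cbn [fst snd].
  exact: (brfund ha hb hc hd he).
exact: (fundV _ _ _ _ _ ha hb hc hd he).
Qed.

Theorem mainW : JLSTS parW delta brW.
Proof.
split; first exact: gradedW.
split; first exact: triW.
split.
  move=> da db dc x y z hx hy hz; rewrite (brW_hom hx hy hz); exact: hom_bh.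
split.
  move=> da db x y z hx hy; rewrite (brW_hom2 _ hy hx) (brW_hom2 _ hx hy) /bsum.
  by rewrite !(skew_bh _ _ hx hy) scalerDr.
split; first exact: cycW.
exact: fundW.
Qed.

End Main.


Theorem proposition3p3 (K : fieldType) (delta : K)
  (T : lmodType K) (par : T -> T) (br : T -> T -> T -> T)
  (V : lmodType K) (parV : V -> V) (theta : T -> T -> V -> V) :
  (delta = 1 \/ delta = -1) ->
  JLSTS par delta br ->
  representation par delta br parV theta ->
  JLSTS (parTV par parV) delta (brTV par parV delta br theta).
Proof.
move=> Hd [gT [[brL1 [brL2 brL3]] [brhom [brskew [brcyc brfund]]]]]
  [gV [thL [thL1 [thL2 [thhom RR]]]]].
exact: (mainW Hd gT brL1 brL2 brL3 brhom brskew brcyc brfund gV thL thL1 thL2 thhom RR).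
Qed.
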